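(* Let $m,n\ge0$, $0\le k\le\min(m,n)$, and let $i,j$ be integers with $0\le i\le m$, $0\le j\le n$, $k\le i+j\le m+n-k$. Then $$c_{m,n,k}(i,j)=\sum_{l=0}^{k}(-1)^l\binom{i+j-k}{i-l}\binom{m-i}{k-l}\binom{n-j}{l}.$$
   Context: Binomial coefficients $\binom{a}{b}$ equal $\frac{a!}{b!(a-b)!}$ when $0\le b\le a$ and $0$ otherwise. Let $e,f,h$ be the standard basis of $\mathfrak{sl}(2,\mathbb{C})$. $V(n)$ is the irreducible representation of highest weight $n$ with fixed highest weight vector $\phi_n$; $\{f^i\phi_n\}_{0\le i\le n}$ is a basis, $f^{n+1}\phi_n=0$. $\mathfrak{sl}(2)$ acts on $V(m)\otimes V(n)$ by $X(v\otimes w)=Xv\otimes w+v\otimes Xw$. For $0\le k\le\min(m,n)$, $\phi_{m,n,k}=\sum_{l=0}^{k}(-1)^l\binom{m-l}{k-l}\binom{n-k+l}{l} f^l\phi_m\otimes f^{k-l}\phi_n$ (a highest weight vector of weight $m+n-2k$). The coordinates $c_{m,n,k}(i,j)$ are defined by $f^{p-k}\phi_{m,n,k}=\sum_{i+j=p,\,0\le i\le m,\,0\le j\le n} c_{m,n,k}(i,j)\, f^i\phi_m\otimes f^j\phi_n$ for $k\le p\le m+n-k$. *)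

(* Defs.v *)
From HB Require Import structures.
From mathcomp Require Import all_boot all_order all_algebra all_field.
Set Implicit Arguments. Unset Strict Implicit. Unset Printing Implicit Defensive.
Import Order.TTheory GRing.Theory Num.Theory.
Local Open Scope ring_scope.

(* V(m) is modelled as column vectors 'cV[algC]_(m.+1); the highest weight
   vector phi_m is the first standard basis vector, and f acts by the
   lowering (shift) matrix: f e_i = e_(i+1) (and f e_m = 0).
   Hence f^i phi_m = e_i is the basis {f^i phi_m}. *)
Definition fmx (m : nat) : 'M[algC]_(m.+1) :=
  \matrix_(r < m.+1, s < m.+1) ((r : nat) == s.+1)%:R.

Definition hw (m : nat) : 'cV[algC]_(m.+1) := delta_mx 0 0.

Definition fpow (m i : nat) : 'cV[algC]_(m.+1) := (fmx m) ^+ i *m hw m.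

(* V(m) (x) V(n) is modelled as (m+1) x (n+1) matrices; v (x) w := v w^T. *)
Definition tens (m n : nat) (v : 'cV[algC]_(m.+1)) (w : 'cV[algC]_(n.+1))
  : 'M[algC]_(m.+1, n.+1) := v *m w^T.

Definition ftens (m n : nat) (T : 'M[algC]_(m.+1, n.+1)) : 'M[algC]_(m.+1, n.+1) :=
  fmx m *m T + T *m (fmx n)^T.

Lemma ftens_tens m n v w :
  ftens (tens v w) = tens (fmx m *m v) w + tens v (fmx n *m w).
Proof. by rewrite /ftens /tens mulmxA trmx_mul mulmxA. Qed.

Definition phimnk (m n k : nat) : 'M[algC]_(m.+1, n.+1) :=
  \sum_(l < k.+1) ((-1) ^+ l * ('C(m - l, k - l))%:R * ('C(n - k + l, l))%:R)
     *: tens (fpow m l) (fpow n (k - l)).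

(* coordinate c_{m,n,k}(i,j): coefficient of f^i phi_m (x) f^j phi_n
   in f^(p-k) phi_{m,n,k}, p = i + j.  Since f^i phi_m (x) f^j phi_n is
   the matrix unit delta_mx i j in this model, the coordinate is the
   (i,j) entry. *)
Definition coord_c (m n k : nat) (i : 'I_m.+1) (j : 'I_n.+1) : algC :=
  (iter (i + j - k) (@ftens m n) (phimnk m n k)) i j.

(* integer binomial with the convention binom(a,b) = 0 for b < 0:
   binom(a, i - l) where i - l is an integer difference *)
Definition binom_sub (a i l : nat) : nat := if (l <= i)%N then 'C(a, i - l) else 0%N.

(* Main.v *)
Require Import Defs.
From HB Require Import structures.
From mathcomp Require Import all_boot all_order all_algebra all_field.
From mathcomp Require Import ring zify.
Import Order.TTheory GRing.Theory Num.Theory.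
Local Open Scope ring_scope.


Lemma AL (k mu nu : nat) (x y : nat -> algC) : (forall l, y l.+1 = x l) ->
 \sum_(l < k.+1) (-1)^+l * x l * ('C(mu.+1, k-l))%:R * ('C(nu,l))%:R
 + \sum_(l < k.+1) (-1)^+l * y l * ('C(mu,k-l))%:R * ('C(nu.+1,l))%:R
 = \sum_(l < k.+1) (-1)^+l * (x l + y l) * ('C(mu,k-l))%:R * ('C(nu,l))%:R.
Proof.
move=> Hy.
have e1 l : 'C(mu.+1,k-l) = ('C(mu,k-l) + (if (l < k)%N then 'C(mu,k-l.+1) else 0))%N.
  case: ltnP => H; first by rewrite -(subnSK H) binS.
  have ->: (k - l = 0)%N by lia.
  by rewrite !bin0.
have e2 l : 'C(nu.+1,l) = ('C(nu,l) + (if l is l'.+1 then 'C(nu,l') else 0))%N.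
  by case: l => [|l]; [rewrite !bin0 | rewrite binS].
under eq_bigr => l _ do rewrite e1 natrD mulrDr mulrDl.
under [X in _ + X = _]eq_bigr => l _ do rewrite e2 natrD mulrDr.
rewrite !big_split /=.
set S1 := \sum_(i < k.+1) _ * _ * (if _ then _ else _)%:R * _.
set S2 := \sum_(i < k.+1) _ * _ * _ * (match _ with 0 => _ | _ => _ end)%:R.
have H0 : S1 + S2 = 0.
  rewrite /S1 /S2 big_ord_recr /= ltnn mulr0 mul0r addr0.
  rewrite [X in _ + X]big_ord_recl /= mulr0 add0r -big_split /=.
  apply: big1 => i _; rewrite /bump /= add1n (ltn_ord i) exprS Hy; ring.
rewrite addrACA H0 addr0 -big_split /=.
by apply: eq_bigr => i _; ring.
Qed.

Lemma bsS q a l : binom_sub q.+1 a.+1 l = (binom_sub q a l + binom_sub q a.+1 l)%N.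
Proof.
rewrite /binom_sub; case: (ltngtP l a.+1) => H.
- have H' : (l <= a)%N := H. by rewrite H' subSn // binS addnC.
- by rewrite leqNgt (ltnW H).
- by rewrite H ltnn subnn !bin0.
Qed.

Lemma bs0 q l : binom_sub q 0 l = (l == 0)%N.
Proof. by rewrite /binom_sub; case: l => [|l] //=; rewrite bin0. Qed.

Lemma sum_single (F : nat -> algC) K a : (forall l, l != a -> F l = 0) ->
  \sum_(l < K) F l = if (a < K)%N then F a else 0.
Proof.
move=> HF; case: ltnP => H.
  rewrite (bigD1 (Ordinal H)) //= big1 ?addr0 // => l Hl; apply: HF.
  by apply: contra Hl => /eqP e; apply/eqP/val_inj.
rewrite big1 // => l _; apply: HF; apply/eqP => e; move: (ltn_ord l); rewrite e; lia.
Qed.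


Lemma shiftE m p (A : 'M[algC]_(m.+1, p)) (r : 'I_m.+1) s :
  (fmx m *m A) r s = if (r : nat) is r'.+1 then A (inord r') s else 0.
Proof.
rewrite mxE; case: r => [[|r'] Hr] /=.
  by apply: big1 => s' _; rewrite mxE /= mul0r.
rewrite (bigD1 (inord r')) //= mxE inordK ?eqxx ?mul1r; last by lia.
rewrite big1 ?addr0 // => s' Hs; rewrite mxE /=.
case: eqP => [e|]; last by rewrite mul0r.
case/eqP: Hs; apply: val_inj; rewrite /= inordK; lia.
Qed.

Lemma ftensE m n (T : 'M[algC]_(m.+1, n.+1)) (a : 'I_m.+1) (b : 'I_n.+1) :
  ftens T a b = (if (a:nat) is a'.+1 then T (inord a') b else 0)
              + (if (b:nat) is b'.+1 then T a (inord b') else 0).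
Proof.
rewrite /ftens mxE shiftE; congr (_ + _).
rewrite -[T *m _]trmxK trmx_mul trmxK mxE shiftE.
by case: b => [[|b] Hb] //=; rewrite mxE.
Qed.

Lemma fpowE m l (r : 'I_m.+1) : fpow m l r 0 = ((r:nat) == l)%:R.
Proof.
elim: l r => [|l IH] r.
  by rewrite /fpow expr0 mul1mx /hw mxE eqxx andbT.
rewrite /fpow exprS -mulmxA shiftE; case: r => [[|r'] Hr] //=.
by have := IH (inord r'); rewrite /fpow => ->; rewrite inordK //=; lia.
Qed.

Lemma tensE m n v w (a : 'I_m.+1) (b : 'I_n.+1) : @tens m n v w a b = v a 0 * w b 0.
Proof. by rewrite /tens mxE big_ord1 mxE. Qed.


Definition Rf m n k a b : algC := \sum_(l < k.+1) (-1)^+l * (binom_sub (a+b-k) a l)%:R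
   * ('C(m-a,k-l))%:R * ('C(n-b,l))%:R.

Lemma Rf0 m n k b : Rf m n k 0 b = ('C(m,k))%:R.
Proof.
rewrite /Rf big_ord_recl big1 ?addr0.
  by rewrite /= bs0 subn0 subn0 bin0 !mulr1 mul1r.
by move=> i _; rewrite bs0 /= !mulr0 !mul0r.
Qed.

Lemma bsz a l : binom_sub 0 a l = (l == a).
Proof.
rewrite /binom_sub bin0n; case: ltngtP => H.
- by apply/eqP; lia.
- by [].
- by rewrite H subnn.
Qed.

Lemma RI m n k t a b : (k <= minn m n)%N -> (a <= m)%N -> (b <= n)%N -> (a + b = k + t.+1)%N ->
  Rf m n k a b = (if a is a'.+1 then Rf m n k a' b else 0)
               + (if b is b'.+1 then Rf m n k a b' else 0).
Proof.
move=> Hk Ha Hb Hab.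
case: a Ha Hab => [|a'] Ha Hab; case: b Hb Hab => [|b'] Hb Hab.
- lia.
- by rewrite add0r !Rf0.
- rewrite addr0 /Rf !addn0 !subn0.
  have eq1 : (a'.+1 - k = (a' - k).+1)%N by lia.
  have em : (m - a' = (m - a'.+1).+1)%N by lia.
  rewrite eq1 em.
  under eq_bigr => l _ do rewrite bsS natrD.
  rewrite -(AL k (m - a'.+1) n (fun l => (binom_sub (a' - k) a' l)%:R)
              (fun l => (binom_sub (a' - k) a'.+1 l)%:R)); last first.
    by move=> l; rewrite /binom_sub ltnS subSS.
  rewrite [X in _ + X]big1 ?addr0 // => l _.
  rewrite /binom_sub; case: leqP => H; last by rewrite mulr0 !mul0r.
  rewrite bin_small ?mulr0 ?mul0r //; have := ltn_ord l; lia.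
- rewrite /Rf.
  have eq1 : (a'.+1 + b'.+1 - k = (a' + b'.+1 - k).+1)%N by lia.
  have eq2 : (a'.+1 + b' - k = a' + b'.+1 - k)%N by lia.
  have em : (m - a' = (m - a'.+1).+1)%N by lia.
  have en : (n - b' = (n - b'.+1).+1)%N by lia.
  rewrite eq1 eq2 em en.
  under eq_bigr => l _ do rewrite bsS natrD.
  by rewrite -(AL k (m - a'.+1) (n - b'.+1) (fun l => (binom_sub (a' + b'.+1 - k) a' l)%:R)
              (fun l => (binom_sub (a' + b'.+1 - k) a'.+1 l)%:R)) //;
    move=> l; rewrite /binom_sub ltnS subSS.
Qed.


Lemma phiE m n k (a : 'I_m.+1) (b : 'I_n.+1) : (k <= minn m n)%N ->
  phimnk m n k a b = if (a + b == k)%N then Rf m n k a b else 0.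
Proof.
move=> Hk.
rewrite /phimnk summxE.
under eq_bigr => l _ do rewrite mxE tensE !fpowE.
rewrite (@sum_single (fun l : nat => (-1) ^+ l * ('C(m - l, k - l)%N)%:R * ('C(n - k + l, l))%:R *
   (((a:nat) == l)%:R * ((b:nat) == (k - l)%N)%:R)) _ a); last first.
  by move=> l /negbTE Hl; rewrite eq_sym Hl !mul0r mulr0.
rewrite eqxx mul1r; case: (boolP ((a + b)%N == k)) => E; last first.
  case: ltnP => H //; case: eqP => E2; last by rewrite !mulr0.
  by move: E; rewrite E2; lia.
move/eqP: E => E.
rewrite /Rf (@sum_single (fun l : nat => (-1) ^+ l * (binom_sub (a + b - k) a l)%:R *
   ('C(m - a, k - l))%:R * ('C(n - b, l))%:R) _ a); last first.
  by move=> l Hl; rewrite E subnn bsz (negbTE Hl) !mulr0 !mul0r.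
have -> : (a < k.+1)%N by lia.
have -> : ((b:nat) == k - a)%N by apply/eqP; lia.
have -> : (n - k + a = n - b)%N by lia.
by rewrite E subnn bsz !eqxx /= mulr1 mulr1.
Qed.


Definition Gt m n k t (a b : nat) : algC :=
  if (a <= m)%N && (b <= n)%N then
    (iter t (@ftens m n) (phimnk m n k)) (inord a) (inord b) else 0.

Lemma GtS m n k t a b : (a <= m)%N -> (b <= n)%N ->
  Gt m n k t.+1 a b = (if a is a'.+1 then Gt m n k t a' b else 0)
                    + (if b is b'.+1 then Gt m n k t a b' else 0).
Proof.
move=> Ha Hb; rewrite /Gt Ha Hb /= ftensE !inordK; try lia.
case: a Ha => [|a'] Ha; case: b Hb => [|b'] Hb //=.
- by rewrite ifT //; lia.
- by rewrite ifT //; lia.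
- by rewrite !ifT //; lia.
Qed.

Lemma Gt_eq m n k t a b : (k <= minn m n)%N -> (a <= m)%N -> (b <= n)%N ->
  Gt m n k t a b = if (a + b == k + t)%N then Rf m n k a b else 0.
Proof.
move=> Hk; elim: t a b => [|t IH] a b Ha Hb.
  have Ha' : (a < m.+1)%N by lia. have Hb' : (b < n.+1)%N by lia.
  rewrite /Gt Ha Hb /=.
  have -> : (inord a : 'I_m.+1) = Ordinal Ha' by apply: val_inj; rewrite /= inordK.
  have -> : (inord b : 'I_n.+1) = Ordinal Hb' by apply: val_inj; rewrite /= inordK.
  by rewrite (@phiE _ _ _ (Ordinal Ha') (Ordinal Hb') Hk) /= addn0.
rewrite GtS //.
case: (boolP ((a + b)%N == (k + t.+1)%N)) => E.
  rewrite (@RI _ _ _ _ _ _ Hk Ha Hb (eqP E)).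
  case: a Ha E => [|a'] Ha E; case: b Hb E => [|b'] Hb E; rewrite ?IH; try lia;
    rewrite ?ifT //; lia.
  case: a Ha E => [|a'] Ha E; case: b Hb E => [|b'] Hb E; rewrite ?IH ?add0r ?addr0; try lia;
  rewrite ?ifF ?addr0 //; apply/negbTE/eqP; move/eqP: E; lia.
Qed.

Theorem proposition9p2 (m n k : nat) (i : 'I_m.+1) (j : 'I_n.+1) :
  (k <= minn m n)%N -> (k <= i + j)%N -> (i + j <= m + n - k)%N ->
  coord_c k i j =
    \sum_(l < k.+1) (-1) ^+ l * (binom_sub (i + j - k) i l)%:R
                      * ('C(m - i, k - l))%:R * ('C(n - j, l))%:R.
Proof.
move=> Hk Hij _.
have := @Gt_eq m n k (i + j - k) i j Hk (ltn_ord i : (i <= m)%N) (ltn_ord j : (j <= n)%N).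
rewrite /Gt (ltn_ord i : (i <= m)%N) (ltn_ord j : (j <= n)%N) /= !inord_val.
rewrite ifT; last lia.
by rewrite /Rf /coord_c => <-.
Qed.
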